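(* Let $m,n$ be natural numbers with $m>2$ and $n>1$. The following are equivalent: (i) for every semigroup variety $\mathcal X\subseteq\mathcal D_m$, one has $\operatorname{Nil}(\mathcal A_n\vee\mathcal X)=\operatorname{ZR}(\mathcal X)$; (ii) $n\ge m-1$.
   Context: $\operatorname{var}\Sigma$ denotes the semigroup variety defined by identities $\Sigma$. For a word $w$ and a letter $x$ not occurring in $w$, the symbolic identity $w=0$ stands for the pair $wx=xw=w$. $\mathcal A_n=\operatorname{var}\{x^ny=y,\ xy=yx\}$ (Abelian groups of exponent dividing $n$). $\mathcal D_m=\operatorname{var}\{x^m=0,\ xy=yx\}$. For a periodic semigroup variety $\mathcal Y$, $\operatorname{Nil}(\mathcal Y)$ is its greatest nil-subvariety (a nil-variety is one all of whose semigroups are nil-semigroups). $\mathcal{COM}$ is the variety of all commutative semigroups. Identities of the form $w=0$ are called 0-reduced; a commutative variety is 0-reduced in $\mathbf{Com}$ if it is defined within $\mathcal{COM}$ by 0-reduced identities only. For a commutative nil-variety $\mathcal X$, $\operatorname{ZR}(\mathcal X)$ is the least variety that is 0-reduced in $\mathbf{Com}$ and contains $\mathcal X$ (it is defined within $\mathcal{COM}$ by all 0-reduced identities holding in $\mathcal X$). Joins $\vee$ are taken in the lattice of semigroup varieties. *)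

(* Defs.v *)
From mathcomp Require Import all_boot.
Set Implicit Arguments. Unset Strict Implicit. Unset Printing Implicit Defensive.

Record semigroup := Semigroup {
  carrier :> Type;
  sop : carrier -> carrier -> carrier;
  sopA : forall x y z, sop x (sop y z) = sop (sop x y) z;
  sne : inhabited carrier }.

(* Words of the free semigroup over letters nat: nonempty sequences,
   represented as (first letter, rest). *)
Definition word := (nat * seq nat)%type.
Definition wseq (w : word) : seq nat := w.1 :: w.2.
Definition wcat (u v : word) : word := (u.1, u.2 ++ wseq v).
Definition wlet (x : nat) : word := (x, [::]).
(* x^k for k >= 1 : x^(k.+1) *)
Definition wpow (x k : nat) : word := (x, nseq k x).

Definition eval (S : semigroup) (v : nat -> S) (w : word) : S :=
  foldl (fun acc x => sop acc (v x)) (v w.1) w.2.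

Definition identity := (word * word)%type.

Definition satisfies (S : semigroup) (e : identity) : Prop :=
  forall v : nat -> S, eval v e.1 = eval v e.2.

Definition sclass := semigroup -> Prop.
Definition subclass (V W : sclass) : Prop := forall S, V S -> W S.
Definition eqclass (V W : sclass) : Prop := forall S, V S <-> W S.

Definition Mod (Sig : identity -> Prop) : sclass :=
  fun S => forall e, Sig e -> satisfies S e.
Definition Id (V : sclass) : identity -> Prop :=
  fun e => forall S, V S -> satisfies S e.

Definition is_variety (V : sclass) : Prop :=
  exists Sig, eqclass V (Mod Sig).

Definition vjoin (V W : sclass) : sclass := Mod (fun e => Id V e /\ Id W e).

Fixpoint spow (S : semigroup) (x : S) (k : nat) : S :=
  if k is k'.+1 then sop x (spow x k') else x.  (* spow x k = x^(k+1) *)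
Definition is_zero (S : semigroup) (z : S) : Prop :=
  forall x, sop z x = z /\ sop x z = z.
Definition nil_semigroup (S : semigroup) : Prop :=
  exists z : S, is_zero z /\ forall x : S, exists k, spow x k = z.
Definition nil_class (V : sclass) : Prop := forall S, V S -> nil_semigroup S.

Definition greatest_nil_subvariety (Y N : sclass) : Prop :=
  [/\ is_variety N, subclass N Y, nil_class N &
      forall N', is_variety N' -> subclass N' Y -> nil_class N' -> subclass N' N].

(* symbolic identity w = 0: wx = w and xw = w, x a letter not in w *)
Definition fresh (w : word) : nat := (foldr maxn 0 (wseq w)).+1.
Definition zero_ids (w : word) : identity -> Prop :=
  fun e => e = (wcat w (wlet (fresh w)), w) \/ e = (wcat (wlet (fresh w)) w, w).

Definition comm_id : identity := (wcat (wlet 0) (wlet 1), wcat (wlet 1) (wlet 0)).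

(* A_n = var{x^n y = y, xy = yx} *)
Definition A_var (n : nat) : sclass :=
  Mod (fun e => e = (wcat (wpow 0 n.-1) (wlet 1), wlet 1) \/ e = comm_id).
(* D_m = var{x^m = 0, xy = yx} *)
Definition D_var (m : nat) : sclass :=
  Mod (fun e => zero_ids (wpow 0 m.-1) e \/ e = comm_id).
Definition COM : sclass := Mod (fun e => e = comm_id).

Definition sat_zero (X : sclass) (w : word) : Prop :=
  forall e, zero_ids w e -> Id X e.

Definition ZR (X : sclass) : sclass :=
  Mod (fun e => e = comm_id \/ exists w, sat_zero X w /\ zero_ids w e).

(* Main.v *)
Require Import Defs.
From mathcomp Require Import all_boot.
From Stdlib Require Import Classical Lia.
Set Implicit Arguments. Unset Strict Implicit. Unset Printing Implicit Defensive.

Section Gen.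
Variable S : semigroup.
Implicit Types (h : nat -> S) (w : word).

Lemma foldl_sop_l h (c d : S) s :
  foldl (fun acc x => sop acc (h x)) (sop c d) s = sop c (foldl (fun acc x => sop acc (h x)) d s).
Proof. elim: s c d => [|x s IH] c d //=. by rewrite -sopA IH. Qed.

Lemma eval_cat h a b : eval h (wcat a b) = sop (eval h a) (eval h b).
Proof. by rewrite /eval /wcat /wseq /= foldl_cat /= foldl_sop_l. Qed.

Lemma spow_r (a : S) k : spow a k.+1 = sop (spow a k) a.
Proof. elim: k => [|k IH] //. change (sop a (spow a k.+1) = sop (spow a k.+1) a). by rewrite {1}IH sopA. Qed.

Lemma nseq_rcons (T : Type) k (x : T) : nseq k.+1 x = rcons (nseq k x) x.
Proof. by elim: k => //= k ->. Qed.

Lemma eval_pow h x k : eval h (wpow x k) = spow (h x) k.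
Proof.
rewrite /eval /wpow /=. elim: k => [|k IH] //.
by rewrite nseq_rcons foldl_rcons IH spow_r.
Qed.

Lemma eval_eq_in h h' w : {in wseq w, h =1 h'} -> eval h w = eval h' w.
Proof.
case: w => x s /= H. rewrite /eval /= (H x (mem_head _ _)).
have: {in s, h =1 h'} by move=> z zs; apply: H; rewrite in_cons zs orbT.
elim: s (h' x) {H} => [|y s IH] a H //=.
rewrite H ?mem_head // IH // => z zs; apply: H; by rewrite in_cons zs orbT.
Qed.

Lemma fresh_notin w : fresh w \notin wseq w.
Proof.
rewrite /fresh. have: forall y, y \in wseq w -> y <= foldr maxn 0 (wseq w).
  elim: (wseq w) => // y s IH z; rewrite in_cons => /orP [/eqP->|zs] /=.
    exact: leq_maxl.
  exact: leq_trans (IH _ zs) (leq_maxr _ _).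
move=> H; apply/negP => /H; by rewrite ltnn.
Qed.

Definition upd h f (s : S) := fun y => if y == f then s else h y.

Lemma eval_upd_notin h w f s : f \notin wseq w -> eval (upd h f s) w = eval h w.
Proof.
move=> Hf; apply: eval_eq_in => y ys; rewrite /upd.
case: eqP => // E; by rewrite -E ys in Hf.
Qed.

Lemma eval_let h x : eval h (wlet x) = h x. Proof. by []. Qed.

Definition comm_sg := forall a b : S, sop a b = sop b a.
End Gen.

Definition zabs (T : semigroup) w := forall (h : nat -> T) (s : T),
  sop (eval h w) s = eval h w /\ sop s (eval h w) = eval h w.

Lemma zero_ids_zabs (T : semigroup) w :
  (forall e, zero_ids w e -> satisfies T e) <-> zabs T w.
Proof.
split.
- move=> H h s.
  have H1 := H _ (or_introl erefl) (upd h (fresh w) s).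
  have H2 := H _ (or_intror erefl) (upd h (fresh w) s).
  move: H1 H2 => /=; rewrite !eval_cat (@eval_upd_notin _ h w (fresh w) s (fresh_notin w)) /=.
  by rewrite !eval_let /upd eqxx => -> ->.
- move=> H e [->|->] h /=; rewrite eval_cat; apply H.
Qed.

Lemma sat_comm (T : semigroup) : satisfies T comm_id -> comm_sg T.
Proof.
move=> H a b; have := H (fun k => if k == 0 then a else b).
by rewrite /comm_id /= !eval_cat.
Qed.

Lemma comm_sat (T : semigroup) : comm_sg T -> satisfies T comm_id.
Proof. move=> H v; rewrite /= !eval_cat; apply H. Qed.

Lemma fresh_pow0 k : fresh (wpow 0 k) = 1.
Proof.
rewrite /fresh /wseq /=. suff ->: foldr maxn 0 (nseq k 0) = 0 by [].
by elim: k => //= k ->.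
Qed.

Lemma foldl_move (A : Type) (B : eqType) (f : A -> B -> A)
  (rc : forall a x y, f (f a x) y = f (f a y) x) a t1 t2 x :
  foldl f a (t1 ++ x :: t2) = foldl f (f a x) (t1 ++ t2).
Proof. elim: t1 a => //= y t1 IH a; by rewrite IH rc. Qed.

Lemma foldl_perm (A : Type) (B : eqType) (f : A -> B -> A)
  (rc : forall a x y, f (f a x) y = f (f a y) x) s t a :
  perm_eq s t -> foldl f a s = foldl f a t.
Proof.
elim: s a t => [|x s IH] a t Hp.
  by have := perm_size Hp; case: t {Hp}.
have xt : x \in t by rewrite -(perm_mem Hp) mem_head.
case/splitPr: xt Hp => t1 t2 Hp.
rewrite foldl_move //= ; apply: IH.
have H2 : perm_eq (t1 ++ x :: t2) (x :: t1 ++ t2) by rewrite -cat1s perm_catCA.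
by rewrite -(perm_cons x) (perm_trans Hp H2).
Qed.

Section Comm.
Variable T : semigroup.
Hypothesis cT : comm_sg T.
Implicit Types (h : nat -> T) (w : word).

Definition F h (o : option T) (y : nat) : option T :=
  Some (match o with None => h y | Some a => sop a (h y) end).

Lemma F_rc h o y z : F h (F h o y) z = F h (F h o z) y.
Proof.
case: o => [a|] /=; congr Some; last exact: cT.
by rewrite -!sopA (cT (h y)).
Qed.

Lemma foldF_some h a s : foldl (F h) (Some a) s = Some (foldl (fun acc x => sop acc (h x)) a s).
Proof. by elim: s a => //= y s IH a; rewrite IH. Qed.

Lemma foldF_eval h w : foldl (F h) None (wseq w) = Some (eval h w).
Proof. by rewrite /wseq /= foldF_some. Qed.

Lemma eval_perm h u v : perm_eq (wseq u) (wseq v) -> eval h u = eval h v.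
Proof.
move=> P; have := foldl_perm (@F_rc h) None P; rewrite !foldF_eval; by case.
Qed.

Lemma filter_pred1 (x : nat) s : filter (pred1 x) s = nseq (count_mem x s) x.
Proof. elim: s => //= y s ->; case: eqP => [->|] //. Qed.

Lemma foldF_abs h (e : T) s : (forall t, sop e t = e) -> foldl (F h) (Some e) s = Some e.
Proof.
move=> He; elim: s => //= y s IH.
have ->: F h (Some e) y = Some e by rewrite /F He.
exact: IH.
Qed.

Lemma absorb h w x c : 0 < c -> c <= count_mem x (wseq w) ->
  (forall t, sop (spow (h x) c.-1) t = spow (h x) c.-1) ->
  eval h w = spow (h x) c.-1.
Proof.
move=> c0 cle He.
have P : perm_eq (wseq w) (nseq c x ++ (nseq (count_mem x (wseq w) - c) x ++ filter (predC (pred1 x)) (wseq w))).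
  rewrite catA -nseqD subnKC // -filter_pred1 perm_sym.
  by rewrite (perm_filterC (pred1 x)).
have := foldl_perm (@F_rc h) None P; rewrite foldF_eval foldl_cat.
case: c c0 cle He P => // c _ _ He _.
rewrite /= foldF_some.
have -> : foldl (fun acc y => sop acc (h y)) (h x) (nseq c x) = spow (h x) c.
  by rewrite -(eval_pow h x c).
rewrite foldF_abs //; by case.
Qed.
End Comm.

Section Zn.
Variable n : nat.
Hypothesis hn : 1 < n.
Let npos : 0 < n := ltnW hn.

Definition zadd (a b : 'I_n) : 'I_n := Ordinal (ltn_pmod (a + b) npos).
Lemma zaddA : forall x y z, zadd x (zadd y z) = zadd (zadd x y) z.
Proof. move=> x y z; apply: val_inj => /=. by rewrite modnDmr modnDml addnA. Qed.

Definition Zn : semigroup := @Defs.Semigroup 'I_n zadd zaddA (inhabits (Ordinal npos)).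

Lemma Zn_fold (h : nat -> Zn) (a : Zn) s :
  val (foldl (fun acc x => sop acc (h x)) a s) = (val a + sumn (map (fun y => val (h y)) s)) %% n.
Proof.
elim: s a => [|y s IH] a /=. by rewrite addn0 modn_small.
rewrite IH /= modnDml addnA //.
Qed.

Lemma Zn_eval (h : nat -> Zn) w :
  val (eval h w) = sumn (map (fun y => val (h y)) (wseq w)) %% n.
Proof. by rewrite /eval Zn_fold. Qed.

Lemma Zn_A : A_var n Zn.
Proof.
move=> e [->|->] h; apply: val_inj; rewrite !Zn_eval /=.
  rewrite map_cat sumn_cat map_nseq sumn_nseq /= addnA.
  rewrite -{1}(muln1 (val (h 0))) -mulnDr add1n prednK //.
  by rewrite modnMDl.
by rewrite !addn0 addnC.
Qed.

Lemma Zn_count u v x : satisfies Zn (u, v) ->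
  count_mem x (wseq u) = count_mem x (wseq v) %[mod n].
Proof.
move=> H.
pose h := fun y : nat => (if y == x then Ordinal hn else Ordinal npos) : Zn.
have E : forall s, sumn (map (fun y => val (h y)) s) = count_mem x s.
  elim=> //= y s ->; rewrite /h; by case: (y == x).
have := congr1 val (H h); by rewrite /= !Zn_eval !E.
Qed.
End Zn.

Lemma zabs_r (T : semigroup) w : comm_sg T ->
  (forall (h : nat -> T) s, sop (eval h w) s = eval h w) -> zabs T w.
Proof. move=> cT H h s; split; first exact: H. by rewrite cT H. Qed.

Lemma D_props m (T : semigroup) : D_var m T ->
  comm_sg T /\ forall (a s : T), sop (spow a m.-1) s = spow a m.-1 /\ sop s (spow a m.-1) = spow a m.-1.
Proof.
move=> H.
have Z : zabs T (wpow 0 m.-1) by apply/zero_ids_zabs => e He; apply: H; left.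
split; first by apply: sat_comm; apply: H; right.
move=> a s; have := Z (fun _ => a) s; by rewrite eval_pow.
Qed.

Lemma key m n (T : semigroup) (cT : comm_sg T)
  (Hm : forall (a t : T), sop (spow a m.-1) t = spow a m.-1) (m0 : 0 < m) (n0 : 0 < n)
  (hmn : m.-1 <= n) u v x (Huv : satisfies T (u, v))
  (lt : count_mem x (wseq u) < count_mem x (wseq v))
  (md : count_mem x (wseq u) = count_mem x (wseq v) %[mod n]) :
  zabs T u /\ zabs T v.
Proof.
suff Hu : forall (h : nat -> T) (s : T), sop (eval h u) s = eval h u.
  split; apply: zabs_r => // h s; rewrite ?Huv //.
  by have := Hu h s; rewrite Huv.
move=> h s.
case a0 : (count_mem x (wseq u)) => [|a].
- pose h' := upd h x (spow (h x) m.-1).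
  have xu : x \notin wseq u by apply/count_memPn.
  rewrite -(@eval_upd_notin T h u x (spow (h x) m.-1) xu) -/h' Huv.
  have Ha : forall t, sop (spow (h' x) 1.-1) t = spow (h' x) 1.-1.
    by move=> t /=; rewrite /h' /upd eqxx Hm.
  rewrite /= (@absorb T cT h' v x 1) //; by rewrite -a0.
- have Hb : m <= count_mem x (wseq v).
    have le : count_mem x (wseq u) <= count_mem x (wseq v) by exact: ltnW.
    move: md; move/esym/eqP; rewrite eqn_mod_dvd // => D.
    have := dvdn_leq _ D; rewrite subn_gt0 => /(_ lt) => Hn.
    have H := leq_trans hmn Hn.
    rewrite -(subnKC le) -(prednK m0) {1}a0 addSn ltnS; exact: leq_trans H (leq_addl _ _).
  rewrite Huv /= (@absorb T cT h v x m) //; by move=> t; rewrite Hm.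
Qed.

Lemma spow_zero (S : semigroup) (z : S) k : is_zero z -> spow z k = z.
Proof. move=> zz; elim: k => //= k ->; exact: (zz z).1. Qed.

Lemma satzero_of (X : sclass) w : (forall T, X T -> zabs T w) -> sat_zero X w.
Proof. move=> H e He T HT; exact: ((zero_ids_zabs T w).2 (H T HT)) e He. Qed.

Lemma zabs_of_satzero (X : sclass) w T : sat_zero X w -> X T -> zabs T w.
Proof. move=> H HT; apply/zero_ids_zabs => e He; exact: H e He T HT. Qed.

Lemma dir2 (m n : nat) (hm : 2 < m) (hn : 1 < n) : m.-1 <= n ->
  (forall Sig : identity -> Prop, subclass (Mod Sig) (D_var m) ->
     greatest_nil_subvariety (vjoin (A_var n) (Mod Sig)) (ZR (Mod Sig))).
Proof.
move=> hmn Sig HX; set X := Mod Sig.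
have m0 : 0 < m by apply: leq_trans hm.
have n0 : 0 < n by apply: ltnW.
split.
- by exists (fun e => e = comm_id \/ exists w, sat_zero X w /\ zero_ids w e).
- move=> S HS [u v] [HA HXe] g.
  have cS : comm_sg S := sat_comm (HS _ (or_introl erefl)).
  have zS : forall w, sat_zero X w -> zabs S w.
    move=> w Hw; apply/zero_ids_zabs => e He; apply: HS; right; by exists w.
  case: (classic (forall x, count_mem x (wseq u) = count_mem x (wseq v))) => [Hc|Hc].
    apply: eval_perm => //; rewrite /perm_eq; apply/allP => y _; apply/eqP; exact: Hc.
  have [x Hx] := not_all_ex_not _ _ Hc.
  have md := @Zn_count n hn u v x (HA _ (@Zn_A n hn)).
  have [Zu Zv] : sat_zero X u /\ sat_zero X v.
    suff H : forall T, X T -> zabs T u /\ zabs T v.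
      by split; apply: satzero_of => T HT; case: (H T HT).
    move=> T HT; have [cT HmT] := D_props (HX T HT).
    have HmT' : forall (a t : T), sop (spow a m.-1) t = spow a m.-1 by move=> a t; case: (HmT a t).
    have Huv : satisfies T (u, v) := HXe T HT.
    case: (ltngtP (count_mem x (wseq u)) (count_mem x (wseq v))) => [lt|lt|eq]; last by [].
      exact: (key cT HmT' m0 n0 hmn Huv lt md).
    have Hvu : satisfies T (v, u) by move=> h; rewrite /= Huv.
    by have [] := key cT HmT' m0 n0 hmn Hvu lt (esym md).
  have [A1 _] := zS u Zu g (eval g v).
  have [B1 _] := zS v Zv g (eval g u).
  by rewrite /= -A1 -[RHS]B1 cS.
- move=> S HS.
  have Z : zabs S (wpow 0 m.-1).
    apply/zero_ids_zabs => e He; apply: HS; right; exists (wpow 0 m.-1); split => //.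
    move=> e' He' T HT; apply: (HX T HT); by left.
  case: (sne S) => a0.
  exists (spow a0 m.-1); split.
    move=> x; have := Z (fun _ => a0) x; by rewrite eval_pow.
  move=> x; exists m.-1.
  have [E1 _] := Z (fun _ => x) (spow a0 m.-1).
  have [_ E2] := Z (fun _ => a0) (spow x m.-1).
  rewrite !eval_pow in E1 E2; by rewrite -E1 E2.
- move=> N' _ Hsub Hnil S HS.
  have SE : forall e, Id (A_var n) e -> Id X e -> satisfies S e.
    move=> e H1 H2; exact: Hsub S HS e (conj H1 H2).
  have [z [zz _]] := Hnil S HS.
  move=> e [->|[w [Hw He]]].
    apply: SE => T HT; [apply: HT; by right | apply: (HX T HT); by right].
  apply: ((zero_ids_zabs S w).2 _ e He).
  have SEw : satisfies S (wcat w (wpow (fresh w) n.-1), w).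
    apply: SE => T HT h /=; rewrite eval_cat eval_pow.
      have cT := sat_comm (HT _ (or_intror erefl)).
      have := HT _ (or_introl erefl) (fun k => if k == 0 then h (fresh w) else eval h w).
      by rewrite /= eval_cat eval_pow /= cT.
    have ZT := zabs_of_satzero Hw HT; exact: (ZT h _).1.
  have Ew : forall h, eval h w = z.
    move=> h; have := SEw (upd h (fresh w) z).
    rewrite /= eval_cat eval_pow (@eval_upd_notin S h w (fresh w) z (fresh_notin w)).
    rewrite /upd eqxx spow_zero // => <-; exact: (zz _).2.
  move=> h s; rewrite Ew; exact: zz s.
Qed.

Lemma eval_hom (S T : semigroup) (f : S -> T) (hf : forall a b, f (sop a b) = sop (f a) (f b))
  (g : nat -> S) w : f (eval g w) = eval (fun k => f (g k)) w.
Proof. case: w => x s; rewrite /eval /=. by elim: s (g x) => [|y s IH] a //=; rewrite IH hf. Qed.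

Ltac nlia := repeat match goal with
  | H : is_true (_ <= _) |- _ => move/leP: H => H
  | |- is_true (_ <= _) => apply/leP
  end; change addn with Nat.add in *; change muln with Nat.mul in *; change subn with Nat.sub in *; nia.

Section Cex.
Variables m n : nat.
Hypothesis hn : 1 < n.
Hypothesis hmn : n.+2 <= m.

Definition P := (nat * nat)%type.
Definition nz (p : P) := 0 < p.1 + p.2.
Definition ok (p : P) := [&& p.1 + p.2 <= n.+2, p.1 < m & p.2 < m].
Definition padd (p q : P) : P := (p.1 + q.1, p.2 + q.2).
Definition mul (p q : P) : P := if [&& nz p, nz q & ok (padd p q)] then padd p q else (0, 0).

Lemma paddA p q r : padd p (padd q r) = padd (padd p q) r.
Proof. by rewrite /padd /= !addnA. Qed.
Lemma paddC p q : padd p q = padd q p.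
Proof. by rewrite /padd addnC [p.2 + _]addnC. Qed.
Lemma nzD p q : nz p -> nz (padd p q).
Proof.
case: p q => a b [c d]; rewrite /nz /padd /= => H.
apply: leq_trans H _; exact: leq_add (leq_addr _ _) (leq_addr _ _).
Qed.
Lemma okDl p q : ok (padd p q) -> ok p.
Proof.
case: p q => a b [c d]; rewrite /ok /padd /= => /and3P [H1 H2 H3]; apply/and3P; split.
- apply: leq_trans H1; exact: leq_add (leq_addr _ _) (leq_addr _ _).
- exact: leq_ltn_trans (leq_addr _ _) H2.
- exact: leq_ltn_trans (leq_addr _ _) H3.
Qed.
Lemma okDr p q : ok (padd p q) -> ok q.
Proof. rewrite paddC; exact: okDl. Qed.

Definition mul3 p q r := if [&& nz p, nz q, nz r & ok (padd (padd p q) r)]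
  then padd (padd p q) r else (0, 0).

Lemma mulA p q r : mul p (mul q r) = mul (mul p q) r.
Proof.
have L : mul (mul p q) r = mul3 p q r.
  rewrite [mul p q]/mul; case: (boolP [&& nz p, nz q & ok (padd p q)]) => [/and3P [Hp Hq Ho] | Hn].
    by rewrite /mul3 /mul (nzD _ Hp) Hp Hq.
  rewrite /mul3 /mul /=; case: ifP => // /and4P [Hp Hq Hr Ho].
  case/negP: Hn; by rewrite Hp Hq (okDl Ho).
have R : mul p (mul q r) = mul3 p q r.
  rewrite [mul q r]/mul; case: (boolP [&& nz q, nz r & ok (padd q r)]) => [/and3P [Hq Hr Ho] | Hn].
    by rewrite /mul3 /mul (nzD _ Hq) Hq Hr paddA /= ?andbT.
  rewrite /mul3 /mul /= andbF; case: ifP => // /and4P [Hp Hq Hr Ho].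
  case/negP: Hn; rewrite Hq Hr /=; apply: (@okDr p); by rewrite paddA.
by rewrite L R.
Qed.

Lemma mulC p q : mul p q = mul q p.
Proof. by rewrite /mul paddC andbCA. Qed.

Definition SS : semigroup := @Defs.Semigroup P mul mulA (inhabits (0, 0)).

Definition c (p : P) : P := if p == (1, n.+1) then (n.+1, 1) else p.

Lemma mul_c p q : mul (c p) q = mul p q.
Proof.
rewrite /c; case: eqP => // ->; rewrite /mul /nz /ok /padd /=.
case: q => a b /=.
case: (boolP (0 < a + b)) => H; last by rewrite /= ?andbF.
have -> : (n.+1 + a + (1 + b) <= n.+2) = false.
  apply/negbTE; rewrite -ltnNge; nlia.
have -> : (1 + a + (n.+1 + b) <= n.+2) = false.
  apply/negbTE; rewrite -ltnNge; nlia.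
by [].
Qed.

Lemma mul_cr p q : mul p (c q) = mul p q.
Proof. by rewrite mulC mul_c mulC. Qed.

Definition mulT p q := c (mul p q).
Lemma mulTA p q r : mulT p (mulT q r) = mulT (mulT p q) r.
Proof. by rewrite /mulT mul_c mul_cr mulA. Qed.

Definition TT : semigroup := @Defs.Semigroup P mulT mulTA (inhabits (0, 0)).


Ltac bsplit := repeat match goal with
 | H : is_true (_ && _) |- _ => move/andP: H => [? ?]
 | H : (_ && _) = false |- _ => move/negbT: H; rewrite negb_and => /orP [?|?]
 | H : is_true (~~ (_ && _)) |- _ => move: H; rewrite negb_and => /orP [?|?]
 | H : is_true (~~ (_ <= _)) |- _ => rewrite -ltnNge in H
 | H : (_ <= _) = false |- _ => move/negbT: H => ?
 | H : is_true (_ == _) |- _ => move/eqP: H => ?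
 | H : (_ == _) = false |- _ => move/eqP: H => ?
 | H : is_true (~~ (_ == _)) |- _ => move/eqP: H => ?
 end.

Definition scale k (p : P) : P := (k * p.1, k * p.2).
Lemma padd_scale a j : padd a (scale j a) = scale j.+1 a.
Proof. by rewrite /padd /scale !mulSn. Qed.

Lemma spowS a k : @spow SS a k.+1 = if nz a && ok (scale k.+2 a) then scale k.+2 a else (0, 0).
Proof.
elim: k => [|k IH].
  change (mul a a = if nz a && ok (scale 2 a) then scale 2 a else (0, 0)).
  have E : scale 2 a = padd a a by case: a => ? ?; rewrite /scale /padd /= !mul2n !addnn.
  by rewrite /mul E andbA andbb.
change (mul a (@spow SS a k.+1) = if nz a && ok (scale k.+3 a) then scale k.+3 a else (0, 0)).
rewrite IH; case: (boolP (nz a && ok (scale k.+2 a))) => [/andP [Ha Ho]|Hn].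
  have Hs : nz (scale k.+2 a) by rewrite -padd_scale; exact: nzD.
  by rewrite /mul Ha Hs padd_scale.
rewrite /mul /= andbF; case: ifP => // /andP [Ha Ho].
case/negP: Hn; rewrite Ha /=; apply: (@okDr a); by rewrite padd_scale.
Qed.

Lemma spowT a k : @spow TT a k.+1 = c (@spow SS a k.+1).
Proof.
elim: k => [|k IH] //.
change (mulT a (@spow TT a k.+1) = c (mul a (@spow SS a k.+1))).
by rewrite IH /mulT mul_cr.
Qed.

Lemma not_ok_m a : nz a -> ~~ ok (scale m a).
Proof.
case: a => a1 a2; rewrite /nz /ok /scale /= => H.
apply/negP => /and3P [_ H1 H2].
case: a1 H H1 => [|a1] H H1.
  have := leq_pmulr m H; by rewrite leqNgt H2.
have := leq_pmulr m (ltn0Sn a1); by rewrite leqNgt H1.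
Qed.

Lemma Em : m.-1 = (m.-2).+1.
Proof. have H1 := hmn; have H2 := hn. repeat match goal with
  | H : is_true (_ <= _) |- _ => move/leP: H => H
  end. lia. Qed.

Lemma spowT_m a : @spow TT a m.-1 = (0, 0).
Proof.
rewrite Em spowT spowS.
have -> : (m.-2).+2 = m by have H1 := hmn; have H2 := hn; nlia.
case: (boolP (nz a)) => Ha /=; last by [].
by rewrite (negbTE (not_ok_m Ha)).
Qed.

Lemma absT e : mulT e (1, 0) = e -> e = (0, 0).
Proof.
case: e => a b; rewrite /mulT /c.
case: eqP => [Hm E|_ Hm].
  case: E => Ea Eb; subst a b; move: Hm; rewrite /mul /padd /=.
  case: ifP => _ H; inversion H; nlia.
move: Hm; rewrite /mul /padd /=; case: ifP => _ H; inversion H; [nlia | done].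
Qed.

Lemma c0 p : c p = (0, 0) -> p = (0, 0).
Proof. rewrite /c; by case: eqP => // _ [] /esym. Qed.

Lemma mul0l q : mul (0, 0) q = (0, 0). Proof. by []. Qed.
Lemma mul0r q : mul q (0, 0) = (0, 0). Proof. by rewrite mulC. Qed.

Definition sp p := if nz p && ok (scale n.+1 p) then scale n.+1 p else (0, 0).

Lemma spow_n a : @spow SS a n = sp a.
Proof. have n0 : 0 < n by apply: ltnW. have E1 := spowS a n.-1. by rewrite prednK // in E1. Qed.

Definition deg1 (p : P) := p.1 + p.2 == 1.

Lemma Lz a b : ~~ (deg1 a && deg1 b) -> mul (sp a) b = (0, 0).
Proof.
move=> H; rewrite /sp; case: ifP => [/andP [Ha Ho]|_]; last by [].
rewrite /mul; case: ifP => // /and3P [_ Hb Ho2]; exfalso.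
move/negP: H; apply; case: a Ha Ho Ho2 => a1 a2; case: b Hb => b1 b2.
rewrite /deg1 /nz /ok /scale /padd /= => Hb Ha _ /and3P [Ho2 _ _].
apply/andP; split; apply/eqP; nlia.
Qed.

Lemma uvT a b : c (mul (@spow SS a n) b) = c (mul a (@spow SS b n)).
Proof.
rewrite !spow_n.
case: (eqVneq a b) => [->|neq]; first by rewrite mulC.
case: (boolP (deg1 a && deg1 b)) => H; last first.
  rewrite Lz // [mul a _]mulC Lz //; by rewrite andbC.
case/andP: H; case: a neq => a1 a2; case: b => b1 b2 neq.
rewrite /deg1 /= => /eqP Ha /eqP Hb.
have f1 : (n.+1 < m) = true by [].
have f2 : (1 < m) = true by apply: leq_trans hmn.
have f0 : (0 < m) = true by apply: leq_trans hmn.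
have f4 : (n < n.+2) = true by apply: leqW.
have f3 : (n.+1 == 1) = false by apply/negbTE; rewrite eqSS -lt0n; exact: ltnW.
move: Ha Hb neq.
case: a1 a2 => [|[|a1]] [|[|a2]] //; rewrite ?addn0 ?add0n ?addnS ?addSn //= => _.
all: case: b1 b2 => [|[|b1]] [|[|b2]] //; rewrite ?addn0 ?add0n ?addnS ?addSn //= => _ neq.
all: rewrite /sp /mul /c /nz /ok /scale /padd /= ?muln0 ?muln1 ?addn0 ?addn1 ?add0n ?f0 ?f1 ?f2 ?leqnn /= ?f3 //.
all: do 3 (rewrite /= ?muln0 ?muln1 ?addn0 ?addn1 ?add0n ?f0 ?f1 ?f2 ?f3 ?f4 ?leqnn ?addnS ?addSn ?ltnSn ?eqxx //=).
all: by case: ifP.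
Qed.

Lemma viol : mul (sp (1, 0)) (0, 1) <> mul (1, 0) (sp (0, 1)).
Proof.
have f1 : (n.+1 < m) = true by [].
have f2 : (1 < m) = true by apply: leq_trans hmn.
have f0 : (0 < m) = true by apply: leq_trans hmn.
have f4 : (n < n.+2) = true by apply: leqW.
rewrite /sp /mul /nz /ok /scale /padd.
do 3 (rewrite /= ?muln0 ?muln1 ?addn0 ?addn1 ?add0n ?f0 ?f1 ?f2 ?f4 ?leqnn ?addnS ?addSn ?ltnSn ?eqxx //=).
have hn' := hn; by move=> [E _]; rewrite E in hn'.
Qed.

Lemma dir1_false :
  (forall Sig : identity -> Prop, subclass (Mod Sig) (D_var m) ->
     greatest_nil_subvariety (vjoin (A_var n) (Mod Sig)) (ZR (Mod Sig))) -> False.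
Proof.
move=> H.
have n0 : 0 < n by apply: ltnW.
pose u0 := wcat (wpow 0 n) (wlet 1).
pose v0 := wcat (wlet 0) (wpow 1 n).
pose Sig0 := fun e => (zero_ids (wpow 0 m.-1) e \/ e = comm_id) \/ e = (u0, v0).
have HX : subclass (Mod Sig0) (D_var m) by move=> T HT e He; apply: HT; left.
have [_ Hsub _ _] := H Sig0 HX.
have TX : Mod Sig0 TT.
  move=> e [[He|->]|->].
  - apply: ((zero_ids_zabs TT _).2 _ e He) => h s; rewrite eval_pow spowT_m; split => //=.
    by rewrite /mulT mul0r.
  - apply: comm_sat => a b; by rewrite /= /mulT mulC.
  - move=> h; rewrite /= !eval_cat !eval_pow /=.
    rewrite -(prednK n0) !spowT prednK // /mulT mul_c mul_cr; exact: uvT.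
have SZR : ZR (Mod Sig0) SS.
  move=> e [->|[w [Hw He]]].
  - apply: comm_sat => a b; exact: mulC.
  - apply: ((zero_ids_zabs SS w).2 _ e He).
    have ZT := zabs_of_satzero Hw TX.
    suff E : forall g : nat -> SS, eval g w = (0, 0).
      move=> g s; rewrite E; split; [exact: mul0l | exact: mul0r].
    move=> g.
    have hc : forall a b : SS, c (sop a b) = sop (c a : TT) (c b) by move=> a b; rewrite /= /mulT mul_c mul_cr.
    have hom := @eval_hom SS TT c hc g w.
    have [A _] := ZT (fun k => c (g k)) (1, 0).
    rewrite -hom in A; exact: c0 (absT A).
have IdA : Id (A_var n) (u0, v0).
  move=> T HT h.
  have ax : forall a b : T, sop (spow a n.-1) b = b.
    move=> a b; have := HT _ (or_introl erefl) (fun k => if k == 0 then a else b).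
    by rewrite /= eval_cat eval_pow.
  rewrite /= !eval_cat !eval_pow /= -(prednK n0) !spow_r !ax.
  by [].
have IdX : Id (Mod Sig0) (u0, v0) by move=> T HT; apply: HT; right.
have := Hsub SS SZR (u0, v0) (conj IdA IdX) (fun k => if k == 0 then (1, 0) else (0, 1)).
rewrite /= !eval_cat !eval_pow /= !spow_n; exact: viol.
Qed.

End Cex.
Theorem mainTheorem3 (m n : nat) (hm : 2 < m) (hn : 1 < n) :
  (forall Sig : identity -> Prop, subclass (Mod Sig) (D_var m) ->
     greatest_nil_subvariety (vjoin (A_var n) (Mod Sig)) (ZR (Mod Sig)))
  <-> m.-1 <= n.
Proof.
split; last exact: dir2.
move=> H; case: (leqP m.-1 n) => // lt; exfalso.
have hmn : n.+2 <= m by have hm' := hm; nlia.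
exact: (@dir1_false m n hn hmn H).
Qed.
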